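(* For every $\alpha \in (1/3, 1/2)$ there exists $\beta>0$ such that the following holds for all sufficiently large $n$: every $n$-vertex graph $G$ with at least $\lfloor n^2/4\rfloor+1$ edges and $b(G)<\alpha n/2$ has at least $\beta n^3$ triangles.
   Context: Graphs are finite and simple. A book of size $b$ in a graph is an edge that lies in $b$ triangles; $b(G)$ denotes the maximum size of a book in $G$, i.e. the maximum, over all edges $e$ of $G$, of the number of triangles of $G$ containing $e$. *)

(* Defs.v *)
From mathcomp Require Import all_boot all_order all_algebra.
Set Implicit Arguments. Unset Strict Implicit. Unset Printing Implicit Defensive.

Definition simple_graph (n : nat) (e : rel 'I_n) : Prop :=
  (forall x y, e x y = e y x) /\ (forall x, ~~ e x x).

Definition num_edges (n : nat) (e : rel 'I_n) : nat :=
  #|[set p : 'I_n * 'I_n | (p.1 < p.2)%N && e p.1 p.2]|.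

Definition num_triangles (n : nat) (e : rel 'I_n) : nat :=
  #|[set t : 'I_n * 'I_n * 'I_n |
      [&& (t.1.1 < t.1.2)%N, (t.1.2 < t.2)%N,
          e t.1.1 t.1.2, e t.1.2 t.2 & e t.1.1 t.2]]|.

Definition book_size (n : nat) (e : rel 'I_n) (x y : 'I_n) : nat :=
  #|[set w : 'I_n | e x w && e y w]|.

(* b(G): maximum book size over all edges (0 if there are no edges) *)
Definition max_book (n : nat) (e : rel 'I_n) : nat :=
  \max_(p : 'I_n * 'I_n | e p.1 p.2) book_size e p.1 p.2.

(* Main.v *)
Require Import Defs.
From mathcomp Require Import all_boot all_order all_algebra.
From mathcomp Require Import zify.
From mathcomp Require Import reals ring lra.
Import Order.TTheory GRing.Theory Num.Theory.
Set Implicit Arguments. Unset Strict Implicit. Unset Printing Implicit Defensive.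

Lemma card_sum (T : finType) (P : pred T) : #|[set x | P x]| = \sum_x (P x : nat).
Proof.
rewrite -[LHS]muln1 -sum_nat_cond_const big_mkcond /=.
by apply: eq_bigr => x _; case: (P x).
Qed.

Lemma sum_pair (I J : finType) (F : I -> J -> nat) :
  \sum_(p : I * J) F p.1 p.2 = \sum_i \sum_j F i j.
Proof. by rewrite pair_big. Qed.


Lemma amgm2 a b : 2*(a*b) <= a*a + b*b.
Proof. have [h _] := nat_AGM2 a b. move: h; rewrite sqrnD; nia. Qed.

Section Sum3.
Variable (I : finType).
Implicit Types F G : I -> I -> I -> nat.
Lemma sum3D F G : \sum_a \sum_b \sum_c (F a b c + G a b c) =
  \sum_a \sum_b \sum_c F a b c + \sum_a \sum_b \sum_c G a b c.
Proof.
rewrite -big_split; apply: eq_bigr => a _; rewrite -big_split; apply: eq_bigr => b _.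
by rewrite -big_split.
Qed.
Lemma sum3_23 F : \sum_a \sum_b \sum_c F a c b = \sum_a \sum_b \sum_c F a b c.
Proof. by apply: eq_bigr => a _; rewrite exchange_big. Qed.
Lemma sum3_12 F : \sum_a \sum_b \sum_c F b a c = \sum_a \sum_b \sum_c F a b c.
Proof. by rewrite exchange_big. Qed.
End Sum3.

Section Comb.
Variables (n : nat) (e : rel 'I_n).
Hypothesis esym : forall x y, e x y = e y x.
Hypothesis eirr : forall x, ~~ e x x.

Definition deg u := \sum_w (e u w : nat).
Definition E2 := \sum_u deg u.

Lemma edges2 : 2 * num_edges e <= E2.
Proof.
rewrite /num_edges card_sum (sum_pair (fun a b : 'I_n => (a < b) && e a b)) mul2n -addnn.
rewrite {2}exchange_big -big_split /=; apply: leq_sum => u _.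
rewrite -big_split /=; apply: leq_sum => w _; rewrite [e w u]esym.
by case: (e u w); case: ltngtP.
Qed.

Definition t6 := \sum_v \sum_u \sum_w (e v u && e u w && e v w : nat).
Definition ts (v u w : 'I_n) := [&& (v < u)%N, (u < w)%N, e v u, e u w & e v w].

Lemma tri_sum : num_triangles e = \sum_v \sum_u \sum_w (ts v u w : nat).
Proof.
rewrite /num_triangles card_sum.
rewrite (sum_pair (fun (p : 'I_n * 'I_n) w => ts p.1 p.2 w)).
by rewrite (sum_pair (fun a b : 'I_n => \sum_w (ts a b w : nat))).
Qed.

Lemma t6_le : t6 <= 6 * num_triangles e.
Proof.
have H : forall v u w : 'I_n, (e v u && e u w && e v w : nat) <=
   ts v u w + ts v w u + ts u v w + ts u w v + ts w v u + ts w u v.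
  move=> v u w; rewrite /ts.
  case evu: (e v u); case euw: (e u w); case evw: (e v w) => //=.
  have d1 : (v : nat) != u by apply: contraTneq evu => /val_inj ->; rewrite (negbTE (eirr u)).
  have d2 : (u : nat) != w by apply: contraTneq euw => /val_inj ->; rewrite (negbTE (eirr w)).
  have d3 : (v : nat) != w by apply: contraTneq evw => /val_inj ->; rewrite (negbTE (eirr w)).
  rewrite [e u v]esym [e w u]esym [e w v]esym evu euw evw /=.
  move: d1 d2 d3; case: (ltngtP v u); case: (ltngtP u w); case: (ltngtP v w) => //=; lia.
rewrite tri_sum /t6.
apply: leq_trans (_ : \sum_v \sum_u \sum_w (ts v u w + ts v w u + ts u v w + ts u w v + ts w v u + ts w u v) <= _).
  by apply: leq_sum => v _; apply: leq_sum => u _; apply: leq_sum => w _; apply: H.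
rewrite !sum3D.
set T0 := \sum_v \sum_u \sum_w (ts v u w : nat).
have h2 : \sum_v \sum_u \sum_w (ts v w u : nat) = T0.
  by apply: eq_bigr => v _; rewrite exchange_big.
have h3 : \sum_v \sum_u \sum_w (ts u v w : nat) = T0 by rewrite exchange_big.
have h4 : \sum_v \sum_u \sum_w (ts u w v : nat) = T0.
  by rewrite exchange_big; apply: eq_bigr => u _; rewrite exchange_big.
have h5 : \sum_v \sum_u \sum_w (ts w v u : nat) = T0.
  under eq_bigr => v _ do rewrite exchange_big.
  by rewrite exchange_big.
have h6 : \sum_v \sum_u \sum_w (ts w u v : nat) = T0.
  rewrite exchange_big.
  under eq_bigr => u _ do rewrite exchange_big.
  by rewrite exchange_big.
rewrite h2 h3 h4 h5 h6; lia.
Qed.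

Definition dout (f : {ffun 'I_n -> bool}) u := \sum_w (e u w && (f u != f w) : nat).
Definition din (f : {ffun 'I_n -> bool}) u := \sum_w (e u w && (f u == f w) : nat).
Definition miss (f : {ffun 'I_n -> bool}) u := \sum_w (~~ e u w && (f u != f w) : nat).
Definition oth (f : {ffun 'I_n -> bool}) u := \sum_w (f u != f w : nat).
Definition cut f := \sum_u dout f u.

Lemma deg_split f u : deg u = din f u + dout f u.
Proof. rewrite /deg -big_split; apply: eq_bigr => w _; by case: (e u w); case: (f u == f w). Qed.

Lemma oth_split f u : oth f u = dout f u + miss f u.
Proof. rewrite /oth -big_split; apply: eq_bigr => w _; by case: (e u w); case: (f u != f w). Qed.

Definition fv v : {ffun 'I_n -> bool} := [ffun w => e v w].

Lemma cut_fv_sum : \sum_v cut (fv v) + 2 * t6 = 2 * \sum_u deg u * deg u.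
Proof.
have h1 : forall v, cut (fv v) = 2 * \sum_u \sum_w (e v u && e u w && ~~ e v w : nat).
  move=> v; rewrite /cut /dout mul2n -addnn [X in _ = _ + X]exchange_big -big_split; apply: eq_bigr => u _.
  rewrite -big_split; apply: eq_bigr => w _; rewrite !ffunE [e w u]esym.
  by case: (e v u); case: (e v w); case: (e u w).
have h2 : \sum_u deg u * deg u = \sum_v \sum_u \sum_w (e v u && e u w : nat).
  rewrite exchange_big; apply: eq_bigr => u _.
  rewrite (eq_bigr (fun v => (e v u : nat) * deg u)); last first.
    move=> v _; rewrite /deg big_distrr /=; apply: eq_bigr => w _.
    by case: (e v u); case: (e u w).
  rewrite -big_distrl /=; congr (_ * _); rewrite /deg; apply: eq_bigr => v _.
  by rewrite esym.
rewrite h2 /t6 (eq_bigr _ (fun v _ => h1 v)) -big_distrr -mulnDr; congr (_ * _).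
rewrite -big_split; apply: eq_bigr => v _; rewrite -big_split; apply: eq_bigr => u _.
rewrite -big_split; apply: eq_bigr => w _.
by case: (e v u); case: (e v w); case: (e u w).
Qed.

Lemma CS : E2 * E2 <= n * \sum_u deg u * deg u.
Proof.
rewrite -(leq_pmul2l (isT : 0 < 2)).
have -> : 2 * (n * \sum_u deg u * deg u) = \sum_u \sum_w (deg u * deg u + deg w * deg w).
  rewrite [RHS](eq_bigr (fun u => n * (deg u * deg u) + \sum_w deg w * deg w)); last first.
    by move=> u _; rewrite big_split /= sum_nat_const card_ord mulnC.
  rewrite big_split /= sum_nat_const card_ord -big_distrr /=; lia.
rewrite /E2 big_distrl big_distrr /=; apply: leq_sum => u _.
rewrite big_distrr big_distrr /=; apply: leq_sum => w _; exact: amgm2.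
Qed.

Lemma sum2D1 (F : 'I_n -> 'I_n -> nat) x : \sum_u \sum_w F u w =
  F x x + \sum_(w | w != x) F x w + \sum_(u | u != x) F u x +
  \sum_(u | u != x) \sum_(w | w != x) F u w.
Proof.
rewrite (bigD1 x) //= (bigD1 x) //=.
have -> : \sum_(u | u != x) \sum_w F u w = \sum_(u | u != x) (F u x + \sum_(w | w != x) F u w).
  by apply: eq_bigr => u _; rewrite (bigD1 x).
by rewrite big_split /=; lia.
Qed.

Definition flip (f : {ffun 'I_n -> bool}) x : {ffun 'I_n -> bool} :=
  [ffun u => if u == x then ~~ f x else f u].

Lemma sumD1_row (G : 'I_n -> nat) x : G x = 0 -> \sum_w G w = \sum_(w | w != x) G w.
Proof. by move=> h; rewrite (bigD1 x) //= h. Qed.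

Lemma flip_cut f x : cut (flip f x) + 2 * dout f x = cut f + 2 * din f x.
Proof.
rewrite /cut /dout /din.
rewrite (sum2D1 (fun u w => (e u w && (flip f x u != flip f x w) : nat)) x).
rewrite (sum2D1 (fun u w => (e u w && (f u != f w) : nat)) x).
rewrite !(negbTE (eirr x)) /=.
have h1 : \sum_(u | u != x) \sum_(w | w != x) (e u w && (flip f x u != flip f x w) : nat) =
          \sum_(u | u != x) \sum_(w | w != x) (e u w && (f u != f w) : nat).
  apply: eq_bigr => u hu; apply: eq_bigr => w hw.
  by rewrite !ffunE (negbTE hu) (negbTE hw).
have h2 : \sum_(w | w != x) (e x w && (flip f x x != flip f x w) : nat) = \sum_w (e x w && (f x == f w) : nat).
  rewrite (@sumD1_row (fun w => (e x w && (f x == f w) : nat)) x); last by rewrite (negbTE (eirr x)).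
  apply: eq_bigr => w hw; rewrite !ffunE eqxx (negbTE hw).
  by case: (f x); case: (f w).
have h3 : \sum_(u | u != x) (e u x && (flip f x u != flip f x x) : nat) = \sum_w (e x w && (f x == f w) : nat).
  rewrite (@sumD1_row (fun w => (e x w && (f x == f w) : nat)) x); last by rewrite (negbTE (eirr x)).
  apply: eq_bigr => w hw; rewrite !ffunE eqxx (negbTE hw) esym.
  by case: (f x); case: (f w).
have h4 : \sum_(w | w != x) (e x w && (f x != f w) : nat) = \sum_w (e x w && (f x != f w) : nat).
  by rewrite (@sumD1_row (fun w => (e x w && (f x != f w) : nat)) x) // (negbTE (eirr x)).
have h5 : \sum_(u | u != x) (e u x && (f u != f x) : nat) = \sum_w (e x w && (f x != f w) : nat).
  rewrite -h4; apply: eq_bigr => w _; rewrite esym; by case: (f x); case: (f w).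
rewrite h1 h2 h3 h4 h5.
move: (\sum_(u | u != x) _) (\sum_w (e x w && (f x == f w) : nat)) (\sum_w (e x w && (f x != f w) : nat)) => D A B.
lia.
Qed.

Lemma din_le_dout f x : (forall g, cut g <= cut f) -> din f x <= dout f x.
Proof. move=> hmax; have := flip_cut f x; have := hmax (flip f x); lia. Qed.

Definition kt (f : {ffun 'I_n -> bool}) := \sum_w (f w : nat).
Definition kf (f : {ffun 'I_n -> bool}) := \sum_w (~~ f w : nat).

Lemma ktf f : kt f + kf f = n.
Proof.
rewrite /kt /kf -big_split /= (eq_bigr (fun _ => 1)); last by move=> w _; case: (f w).
by rewrite sum_nat_const card_ord muln1.
Qed.

Lemma oth_val f u : oth f u = if f u then kf f else kt f.
Proof. by rewrite /oth /kt /kf; case: (f u); apply: eq_bigr => w _; case: (f w). Qed.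

Lemma Omega f : \sum_u oth f u = 2 * (kt f * kf f).
Proof.
rewrite (eq_bigr (fun u => (f u : nat) * kf f + (~~ f u : nat) * kt f)); last first.
  by move=> u _; rewrite oth_val; case: (f u); rewrite /= ?mul1n ?mul0n ?addn0.
by rewrite big_split /= -!big_distrl /= -/(kt f) -/(kf f); lia.
Qed.

Lemma Omega_le f : \sum_u oth f u <= 2 * (n * n %/ 4).
Proof.
rewrite Omega leq_mul2l /= leq_divRL //.
have [h _] := nat_AGM2 (kt f) (kf f). move: h; rewrite ktf; lia.
Qed.

Lemma book_sum u w : book_size e u w = \sum_z (e u z && e w z : nat).
Proof. by rewrite /book_size card_sum. Qed.

Lemma K1 (f : {ffun 'I_n -> bool}) (u w : 'I_n) : f u = f w -> oth f u <= book_size e u w + miss f u + miss f w.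
Proof.
move=> h; rewrite book_sum /oth /miss -!big_split /=; apply: leq_sum => z _.
rewrite -h; by case: (e u z); case: (e w z); case: (f u != f z).
Qed.

Lemma K2 (f : {ffun 'I_n -> bool}) (u w : 'I_n) : f u = f w -> dout f u <= book_size e u w + miss f w.
Proof.
move=> h; rewrite book_sum /dout /miss -!big_split /=; apply: leq_sum => z _.
rewrite -h; by case: (e u z); case: (e w z); case: (f u != f z).
Qed.

Lemma K4 u w : e u w -> book_size e u w <= max_book e.
Proof. move=> h; exact: (@leq_bigmax_cond _ (fun p : 'I_n * 'I_n => e p.1 p.2) (fun p => book_size e p.1 p.2) (u, w) h). Qed.

Lemma sum_sq_pred (Sb : pred 'I_n) :
  \sum_u \sum_w (Sb u && Sb w : nat) = (\sum_u (Sb u : nat)) * (\sum_u (Sb u : nat)).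
Proof.
rewrite big_distrl /=; apply: eq_bigr => u _; rewrite big_distrr /=; apply: eq_bigr => w _.
by case: (Sb u); case: (Sb w).
Qed.

Lemma O1 (Sb : pred 'I_n) (f : {ffun 'I_n -> bool}) : (forall u w, e u w -> f u == f w -> Sb u || Sb w) ->
  \sum_u din f u <= (\sum_u (Sb u : nat)) * (\sum_u (Sb u : nat)) +
     2 * \sum_u \sum_w (Sb u && ~~ Sb w && e u w && (f u == f w) : nat).
Proof.
move=> hS; rewrite -sum_sq_pred mul2n -addnn.
rewrite [X in _ <= _ + (_ + X)]exchange_big -!big_split /=; apply: leq_sum => u _.
rewrite /din -!big_split /=; apply: leq_sum => w _.
rewrite [e w u]esym [f w == f u]eq_sym.
case euw: (e u w); case fuw: (f u == f w) => //=.
by move: (hS u w euw fuw); case: (Sb u); case: (Sb w).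
Qed.

Lemma O2a (Sb : pred 'I_n) f :
  2 * \sum_u (Sb u : nat) * miss f u <= \sum_u miss f u + (\sum_u (Sb u : nat)) * (\sum_u (Sb u : nat)).
Proof.
rewrite -sum_sq_pred mul2n -addnn.
have h : \sum_u (Sb u : nat) * miss f u = \sum_u \sum_w (Sb u && ~~ e u w && (f u != f w) : nat).
  apply: eq_bigr => u _; rewrite /miss big_distrr /=; apply: eq_bigr => w _.
  by case: (Sb u); case: (e u w); case: (f u != f w).
rewrite h [X in _ + X <= _]exchange_big /miss -!big_split /=; apply: leq_sum => u _.
rewrite -!big_split /=; apply: leq_sum => w _.
rewrite [e w u]esym [f w == f u]eq_sym.
by case: (Sb u); case: (Sb w); case: (e u w); case: (f u != f w).
Qed.

Lemma sum_const_ord (k : nat) : \sum_(i : 'I_n) k = (n * k)%N.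
Proof. by rewrite sum_nat_const card_ord. Qed.

Lemma E2_le : (E2 <= n * n)%N.
Proof.
rewrite /E2 /deg -sum_const_ord; apply: leq_sum => u _.
rewrite -[X in (_ <= X)%N]muln1 -sum_const_ord; apply: leq_sum => w _; by case: (e u w).
Qed.

Lemma E2_split f : E2 = (cut f + \sum_u din f u)%N.
Proof. by rewrite /E2 /cut -big_split; apply: eq_bigr => u _; rewrite (deg_split f) addnC. Qed.

Lemma oth_sum f : \sum_u oth f u = (cut f + \sum_u miss f u)%N.
Proof. by rewrite /cut -big_split; apply: eq_bigr => u _; rewrite oth_split. Qed.

Lemma cut_avg f : (forall g, (cut g <= cut f)%N) -> (\sum_v cut (fv v) <= n * cut f)%N.
Proof.
move=> hm; rewrite -sum_const_ord; apply: leq_sum => v _; exact: hm.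
Qed.

Section Real.
Local Open Scope ring_scope.
Variable R : realType.
Variables (f : {ffun 'I_n -> bool}) (th c eta : R).
Hypothesis hmax : forall g, (cut g <= cut f)%N.
Hypothesis hoth : forall u, ((2^-1 - eta) * n%:R <= (oth f u)%:R)%R.
Hypothesis hmb : ((max_book e)%:R < c * n%:R)%R.
Hypothesis hc : (0 <= c)%R.
Hypothesis hth : (0 <= th)%R.
Hypothesis hc2 : (c + 2 * th <= 2^-1 - eta)%R.

Definition Sb u := (th * n%:R <= (miss f u)%:R)%R.
Definition Xu u := \sum_w (~~ Sb w && e u w && (f u == f w) : nat).

Lemma hS u w : e u w -> f u == f w -> Sb u || Sb w.
Proof.
move=> euw /eqP fuw; rewrite /Sb; case: lerP => //= h1; case: lerP => //= h2.
have k1 := K1 fuw; have k4 := K4 euw.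
have := hoth u; move: k1 k4; rewrite -!(ler_nat R) !natrD => k1 k4 k5.
have hN : (0 <= n%:R :> R)%R by rewrite ler0n.
move: hmb hc2 hth hc k1 k4 k5 h1 h2 hN.
move: (oth f u)%:R (book_size e u w)%:R (miss f u)%:R (miss f w)%:R (max_book e)%:R (n%:R : R) => o b mu mw mb N.
nra.
Qed.

Lemma PV u : ((Xu u)%:R * (2^-1 - eta - c - th) <= (c + th) * (miss f u)%:R :> R)%R.
Proof.
have hD : (0 <= 2^-1 - eta - c - th :> R)%R by move: hc2 hth; move: (th) (c) (eta) => a b d; lra.
case: (boolP [exists w, ~~ Sb w && e u w && (f u == f w)]) => [/existsP [w /andP [/andP [nSw euw] fuw]] | /existsPn hn].
  have hX : (Xu u <= din f u)%N.
    by rewrite /Xu /din; apply: leq_sum => z _; case: (Sb z); case: (e u z); case: (f u == f z).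
  have hd := din_le_dout u hmax.
  have k2 := K2 (eqP fuw); have k4 := K4 euw.
  have ho := oth_split f u.
  have hw : ((miss f w)%:R < th * n%:R :> R)%R by move: nSw; rewrite /Sb -ltNge.
  have := hoth u.
  move: hX hd k2 k4; rewrite -!(ler_nat R) !natrD => hX hd k2 k4.
  rewrite ho natrD => h5.
  have hN : (0 <= n%:R :> R)%R by rewrite ler0n.
  move: hX hd k2 k4 h5 hw hmb hN hc hth hc2 hD.
  move: (Xu u)%:R (din f u)%:R (dout f u)%:R (book_size e u w)%:R (miss f w)%:R (max_book e)%:R (miss f u)%:R (n%:R : R) => X dii dou b mw mb mu N.
  move: (th) (c) (eta) => t c' et.
  move=> hX hd k2 k4 h5 hw hmb' hN hc' ht hc2' hD'.
  have hXu : X <= (c' + t) * N by rewrite mulrDl; lra.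
  have hm : (2^-1 - et - c' - t) * N <= mu by rewrite !mulrBl; lra.
  nra.
have -> : Xu u = 0%N.
  by rewrite /Xu big1 // => w _; have := hn w; case: (_ && _).
rewrite mul0r; apply: mulr_ge0; [exact: addr_ge0 | exact: ler0n].
Qed.

Lemma PVsum : ((\sum_u \sum_w (Sb u && ~~ Sb w && e u w && (f u == f w) : nat))%:R * (2^-1 - eta - c - th)
   <= (c + th) * (\sum_u (Sb u : nat) * miss f u)%:R :> R).
Proof.
rewrite !natr_sum big_distrl big_distrr /=; apply: ler_sum => u _.
have -> : \sum_w (Sb u && ~~ Sb w && e u w && (f u == f w) : nat) = ((Sb u : nat) * Xu u)%N.
  rewrite /Xu big_distrr /=; apply: eq_bigr => w _.
  by case: (Sb u); case: (Sb w); case: (e u w); case: (f u == f w).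
case: (Sb u); rewrite ?mul1n ?mul0n; first exact: PV.
by rewrite mul0r mulr0.
Qed.
End Real.
End Comb.

Local Open Scope ring_scope.

Lemma ar_Ct (R : realType) (N Ev Q t T b Ct : R) : 0 < N -> N*N <= 2*Ev -> 2*Q <= N*Ct + 2*t ->
  Ev*Ev <= N*Q -> t <= 6*T -> T < b * N^+3 -> N*N/2 - 12*b*(N*N) < Ct.
Proof.
move=> hN h1 h2 h3 h4 h5.
have hN0 : 0 <= N by apply: ltW.
have s1 : N * (2*Q) <= N * (N*Ct + 2*t) by apply: ler_wpM2l.
have hNN : 0 <= N * N by apply: mulr_ge0.
have s3 : (N*N)*(N*N) <= (2*Ev)*(2*Ev) by apply: ler_pM.
have s4 : N * t <= N * (6 * T) by apply: ler_wpM2l.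
have s5 : N * T < N * (b * N^+3) by rewrite ltr_pM2l.
have s6 : 0 < (N*N) * (Ct - (N*N/2 - 12*b*(N*N))).
  rewrite exprS expr2 in s5. lra.
by move: s6; rewrite pmulr_rgt0 ?subr_gt0 //; apply: mulr_gt0.
Qed.

Lemma ar_M (R : realType) (N Ct M kt kf b : R) : kt + kf = N -> 2*(kt*kf) = Ct + M ->
  N*N/2 - 12*b*(N*N) < Ct -> M < 12*b*(N*N).
Proof.
move=> h1 h2 h3; have h4 : 0 <= (kt - kf) * (kt - kf) by rewrite -expr2 sqr_ge0.
have h5 : 4 * (kt * kf) <= N * N by rewrite -h1; lra.
lra.
Qed.

Lemma ar_k (R : realType) (N Ct kt kf b eta : R) : kt + kf = N -> Ct <= 2*(kt*kf) ->
  N*N/2 - 12*b*(N*N) < Ct -> 6*b <= eta^+2 -> 0 <= eta -> 0 < N -> (2^-1 - eta)*N <= kt.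
Proof.
move=> h1 h2 h3 h4 h5 h6; rewrite leNgt; apply/negP => h7.
have h8 : 2 * eta * N < kf - kt by lra.
have h9 : 0 <= 2 * eta * N by apply: mulr_ge0 => //; [lra | apply: ltW].
have h10 : (2 * eta * N) * (2 * eta * N) <= (kf - kt) * (kf - kt) by apply: ler_pM => //; apply: ltW.
have h11 : (kf - kt) * (kf - kt) = N * N - 4 * (kt * kf) by rewrite -h1; ring.
have h12 : 24 * b * (N*N) <= 4 * eta^+2 * (N * N).
  have : 0 <= N * N by apply: mulr_ge0; apply: ltW.
  nra.
rewrite expr2 in h12. nra.
Qed.

Lemma ar_final (R : realType) (alpha d0 I M s X Y N b : R) :
  d0 = 2^-1 - alpha -> 0 < alpha -> 0 < d0 -> 12 * b <= d0^+3/64 -> 0 < N ->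
  M + 2 <= I -> I <= s*s + 2*X ->
  X * (2^-1 - d0/4 - alpha/2 - d0/4) <= (alpha/2 + d0/4) * Y ->
  2*Y <= M + s*s -> s * (d0/4 * N) <= Y -> Y <= M -> M < 12*b*(N*N) ->
  0 <= s -> 0 <= M -> False.
Proof.
move=> hd ha hd0 hb hN hIM hO1 hPV hO2 hO3 hYM hMb hs hM.
set D := 2^-1 - d0/4 - alpha/2 - d0/4 in hPV.
set C := alpha/2 + d0/4 in hPV.
have hD : D = 4^-1 by rewrite /D hd; field.
have hC0 : 0 <= C by rewrite /C; lra.
have hDC : D - C = d0/4 by rewrite /D /C hd; field.
have hCD : C + D <= 2^-1 by rewrite /C hD hd; lra.
have a1 : D * (M + 2) <= (C + D) * (s*s) + C * M.
  have : C * (2 * Y) <= C * (M + s*s) by apply: ler_wpM2l.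
  rewrite hD in hPV *; lra.
have hsN : 0 <= s * (d0/4 * N) by apply: mulr_ge0 => //; apply: mulr_ge0; apply: ltW => //; lra.
have c1 : (s * (d0/4 * N)) * (s * (d0/4 * N)) <= M * M by apply: ler_pM => //; lra.
have c2 : M * M <= M * (12*b*(N*N)) by apply: ler_wpM2l => //; apply: ltW.
have hNN : 0 < N * N by apply: mulr_gt0.
have c3 : (d0/4)^+2 * (s*s) <= 12 * b * M.
  have : (N*N) * ((d0/4)^+2 * (s*s)) <= (N*N) * (12 * b * M).
    rewrite expr2; lra.
  by rewrite ler_pM2l.
have d1 : (d0/4)^+2 * (D * (M + 2)) <= (d0/4)^+2 * ((C + D) * (s*s) + C * M).
  by apply: ler_wpM2l => //; rewrite sqr_ge0.
have d2 : (C + D) * ((d0/4)^+2 * (s*s)) <= 2^-1 * (12 * b * M).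
  apply: ler_pM => //; [lra | apply: mulr_ge0; [exact: sqr_ge0 | nra]].
have d3 : 12 * b * M <= d0^+3/64 * M by apply: ler_wpM2r.
have hth : 0 < (d0/4)^+2 by apply: exprn_gt0; lra.
have d4 : (d0/4)^+2 * (D - C) = d0^+3/64 by rewrite hDC; rewrite !exprS expr0; field.
have d5 : 0 < (d0/4)^+2 * D by rewrite hD; apply: mulr_gt0 => //; rewrite invr_gt0; lra.
have d6 : 0 <= d0^+3/64 * M by apply: mulr_ge0 => //; apply: divr_ge0; [apply: exprn_ge0; lra | lra].
nra.
Qed.

Lemma ar_IM (ne E c I M O q : nat) : (q < ne)%N -> (2*ne <= E)%N -> E = (c + I)%N ->
  O = (c + M)%N -> (O <= 2*q)%N -> (M + 2 <= I)%N.
Proof. lia. Qed.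
Lemma ar_E2n (nn ne E q r : nat) : (q < ne)%N -> (2*ne <= E)%N -> nn = (q*4 + r)%N -> (r < 4)%N -> (nn <= 2*E)%N.
Proof. lia. Qed.
Lemma ar_Q (a b c d : nat) : (a + 2*b = 2*c)%N -> (a <= d)%N -> (2*c <= d + 2*b)%N.
Proof. lia. Qed.
Lemma ar_npos (n E ne : nat) : (E <= n*n)%N -> (2*ne <= E)%N -> (0 < ne)%N -> (0 < n)%N.
Proof. case: n => //; rewrite muln0; lia. Qed.
Lemma beta_facts (R : realType) (d0 : R) : 0 < d0 -> d0 <= 1 ->
  6 * (d0^+3/1000) <= (d0/4)^+2 /\ 12 * (d0^+3/1000) <= d0^+3/64.
Proof.
move=> h0 h1; have h2 : 0 <= d0 * d0 by nra.
have h4 : d0*d0*d0 <= d0*d0 * 1 := ler_wpM2l h2 h1.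
have h5 : 0 <= d0 * d0 * d0 by nra.
rewrite mulr1 in h4; rewrite !expr2 exprS expr2; split; lra.
Qed.


Theorem theorem2 (R : realType) (alpha : R) :
  3^-1 < alpha -> alpha < 2^-1 ->
  exists beta : R, 0 < beta /\
    exists N : nat, forall n : nat, (N <= n)%N ->
      forall e : rel 'I_n, simple_graph e ->
        (((n * n) %/ 4).+1 <= num_edges e)%N ->
        (max_book e)%:R < alpha * n%:R / 2 ->
        beta * (n%:R ^+ 3) <= (num_triangles e)%:R.
Proof.
move=> ha1 ha2.
have h3 : (0 : R) < 3^-1 by rewrite invr_gt0 ltr0n.
have ha0 : 0 < alpha by lra.
set d0 := 2^-1 - alpha.
have d0pos : 0 < d0 by rewrite /d0; lra.
have d0le : d0 <= 2^-1 by rewrite /d0; lra.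
exists (d0 ^+ 3 / 1000); split.
  by apply: divr_gt0; [exact: exprn_gt0 | rewrite ltr0n].
exists 0%N => n _ e [esym eirr] hedges hbook.
rewrite leNgt; apply/negP => hT.
pose f0 : {ffun 'I_n -> bool} := [ffun=> false].
pose fm := [arg max_(g > f0) cut e g]%N.
have hmax : forall g, (cut e g <= cut e fm)%N.
  by rewrite /fm; case: arg_maxnP => // g _ h g'; apply: h.
have hE := edges2 esym.
have hdiv := divn_eq (n * n) 4.
have hmod := ltn_pmod (n * n) (isT : (0 < 4)%N).
have hcs := CS e.
have hfv := cut_fv_sum esym.
have havg := cut_avg hmax.
have ht6 := t6_le esym eirr.
have hE2s := E2_split e fm.
have hoths := oth_sum e fm.
have hOm := Omega_le fm.
have hOm2 := Omega fm.
have hkt := ktf fm.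
have hE2le := E2_le e.
have hIM : (\sum_u miss e fm u + 2 <= \sum_u din e fm u)%N.
  exact: ar_IM hedges hE hE2s hoths hOm.
have hE2n : (n * n <= 2 * E2 e)%N by exact: ar_E2n hedges hE hdiv hmod.
have hQ : (2 * \sum_u deg e u * deg e u <= n * cut e fm + 2 * t6 e)%N by exact: ar_Q hfv havg.
have npos : (0 < n)%N by apply: ar_npos hE2le hE _; apply: leq_ltn_trans hedges.
set beta := d0 ^+ 3 / 1000.
have hbpos : 0 < beta by apply: divr_gt0; [exact: exprn_gt0 | rewrite ltr0n].
have [hb6 hbd] : 6 * beta <= (d0 / 4) ^+ 2 /\ 12 * beta <= d0 ^+ 3 / 64.
  by apply: beta_facts => //; rewrite /d0; lra.
set N := n%:R : R.
have hN : 0 < N by rewrite /N ltr0n.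
move: hE2n hcs ht6; rewrite -!(ler_nat R) !natrM -/N.
move=> rE2n rcs rt6.
move: hQ; rewrite -(ler_nat R) (natrD _ (n * cut e fm) (2 * t6 e)) !natrM -/N => rQ.
set Ct := (cut e fm)%:R : R.
have hCt := ar_Ct hN rE2n rQ rcs rt6 hT.
set M := (\sum_u miss e fm u)%:R : R.
have hk : (kt fm)%:R + (kf fm)%:R = N by rewrite -natrD hkt.
have hCtM : 2 * ((kt fm)%:R * (kf fm)%:R) = Ct + M.
  by have := congr1 (fun x : nat => (x%:R : R)) (etrans (Logic.eq_sym hOm2) hoths); rewrite /= !natrM natrD.
have hM := ar_M hk hCtM hCt.
have hCtle : Ct <= 2 * ((kt fm)%:R * (kf fm)%:R) by rewrite hCtM lerDl ler0n.
have hd4 : 0 <= d0 / 4 by apply: divr_ge0; [apply: ltW | rewrite ler0n].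
have hoth' : forall u, (2^-1 - d0/4) * N <= (oth fm u)%:R.
  move=> u; rewrite oth_val; case: (fm u).
    apply: (ar_k (kt := (kf fm)%:R) (kf := (kt fm)%:R) _ _ hCt hb6 hd4 hN).
      by rewrite addrC.
    by rewrite (mulrC (kf fm)%:R).
  exact: (ar_k hk hCtle hCt hb6 hd4 hN).
have hmb' : (max_book e)%:R < alpha / 2 * N by rewrite mulrAC.
have hc' : 0 <= alpha / 2 by apply: divr_ge0; [apply: ltW | rewrite ler0n].
have hc2' : alpha / 2 + 2 * (d0 / 4) <= 2^-1 - d0/4 by rewrite /d0; lra.
set Sb' := Sb e fm (d0 / 4).
have hS' : forall u w, e u w -> fm u == fm w -> Sb' u || Sb' w.
  by move=> u w euw fuw; exact: (hS hoth' hmb' hc' hd4 hc2' euw fuw).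
have hO1 := O1 esym hS'.
have hO2 := O2a esym Sb' fm.
have hPV := PVsum esym eirr hmax hoth' hmb' hc' hd4 hc2'.
have hO3 : (\sum_u (Sb' u : nat))%:R * (d0 / 4 * N) <= (\sum_u (Sb' u : nat) * miss e fm u)%:R.
  rewrite !natr_sum big_distrl /=; apply: ler_sum => u _.
  rewrite /Sb'; case hs: (Sb e fm (d0 / 4) u) => /=.
    by rewrite mul1r mul1n; move: hs; rewrite /Sb.
  by rewrite mul0r mul0n.
have hYM : (\sum_u (Sb' u : nat) * miss e fm u <= \sum_u miss e fm u)%N.
  by apply: leq_sum => u _; case: (Sb' u); rewrite ?mul1n ?mul0n.
move: hIM hYM; rewrite -!(ler_nat R) !natrD -/M => rIM rYM.
move: hO1; rewrite -(ler_nat R) (natrD _ (_ * _)%N (2 * _)%N) !natrM => rO1.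
move: hO2; rewrite -(ler_nat R) (natrD _ (\sum_u miss e fm u) (_ * _)%N) !natrM -/M => rO2.
apply: (ar_final (alpha := alpha) (d0 := d0) (b := beta) (N := N) erefl ha0 d0pos hbd hN rIM rO1 hPV rO2 hO3 rYM hM).
  exact: ler0n.
exact: ler0n.
Qed.
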